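(* Let $r>0$, let $m$ be a hyperbolic line in $\mathbb{H}^2$, and let $H$ be one of the two connected components of the set of points at hyperbolic distance exactly $r$ from $m$ (a hypercycle with axis $m$). Let $b,b'$ be points on $m$ with $d(b,b')=\tanh r$, and let $a,a'\in H$ be the points such that the segments $ba$ and $b'a'$ are perpendicular to $m$. Let the box be the closed region bounded by the segments $ab$, $bb'$, $b'a'$ and the arc of $H$ between $a'$ and $a$. Then the box has hyperbolic diameter at most $2r$.
   Context: $\mathbb{H}^2$ is the hyperbolic plane of Gaussian curvature $-1$ with hyperbolic distance $d$. *)

(* Defs.v *)
(* hyperboloid model of the hyperbolic plane H^2 (curvature -1). *)
From Stdlib Require Import Reals.
Open Scope R_scope.

Record pt := Pt { c0 : R; c1 : R; c2 : R }.

Definition mink (x y : pt) : R := - c0 x * c0 y + c1 x * c1 y + c2 x * c2 y.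

Definition H2 (x : pt) : Prop := mink x x = -1 /\ 0 < c0 x.

Definition arcosh (t : R) : R := ln (t + sqrt (t * t - 1)).

Definition hdist (x y : pt) : R := arcosh (- mink x y).

(* Hyperbolic lines: intersections of H2 with timelike planes through 0,
   i.e. planes with a spacelike unit normal n (<n,n> = 1). *)
Definition unit_normal (n : pt) : Prop := mink n n = 1.
Definition line (n : pt) (x : pt) : Prop := H2 x /\ mink x n = 0.

Definition dist_to_set (x : pt) (A : pt -> Prop) (r : R) : Prop :=
  (forall y, A y -> r <= hdist x y) /\
  (forall s, (forall y, A y -> s <= hdist x y) -> s <= r).

Definition equidist (n : pt) (r : R) (x : pt) : Prop :=
  H2 x /\ dist_to_set x (line n) r.

(* The two open half-planes bounded by the line with normal n are
   {<x,n> > 0} and {<x,n> < 0}; sg = 1 or -1 selects one of them.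
   The hypercycle is the part of the equidistant set on that side. *)
Definition hypercycle (n : pt) (r : R) (sg : R) (x : pt) : Prop :=
  equidist n r x /\ 0 < sg * mink x n.

(* Tangent vector at b pointing towards p (Minkowski projection of p
   onto the tangent plane b^perp). *)
Definition tangent_to (b p : pt) : pt :=
  Pt (c0 p + mink p b * c0 b) (c1 p + mink p b * c1 b) (c2 p + mink p b * c2 b).

Definition perp_at (n : pt) (b a : pt) : Prop :=
  line n b /\ H2 a /\ a <> b /\
  forall p, line n p -> mink (tangent_to b a) (tangent_to b p) = 0.

Definition seg (p q : pt) (x : pt) : Prop :=
  H2 x /\ hdist p x + hdist x q = hdist p q.

(* The box: closed region bounded by [a,b], [b,b'], [b',a'] and the arc of
   the hypercycle from a' to a; it is the union of the perpendicular segments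
   from points p of [b,b'] to the hypercycle. *)
Definition box (n : pt) (r sg : R) (b b' : pt) (x : pt) : Prop :=
  exists p q, seg b b' p /\ hypercycle n r sg q /\ perp_at n p q /\ seg p q x.

(* Main.v *)
From Pilot Require Import Defs.
From Stdlib Require Import Reals Lra Psatz.
Import Pilot.Defs.
Open Scope R_scope.

Lemma mink_sym x y : mink x y = mink y x.
Proof. unfold mink; ring. Qed.

Lemma H2_ge1 x y : H2 x -> H2 y -> 1 <= - mink x y.
Proof.
  destruct x as [x0 x1 x2], y as [y0 y1 y2]; unfold H2, mink; simpl.
  intros [Hx Px] [Hy Py].
  assert (HC0 : (x1*y1+x2*y2)^2 + (x1*y2-x2*y1)^2 = (x1*x1+x2*x2)*(y1*y1+y2*y2)) by ring.
  assert (E1 : x1*x1+x2*x2 = x0*x0-1) by lra.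
  assert (E2 : y1*y1+y2*y2 = y0*y0-1) by lra.
  rewrite E1, E2 in HC0.
  assert (HC : (x1*y1+x2*y2)^2 <= (x0*x0-1)*(y0*y0-1)).
  { pose proof (pow2_ge_0 (x1*y2-x2*y1)); lra. }
  assert (H1 : (x0*x0-1)*(y0*y0-1) <= (x0*y0-1)^2).
  { pose proof (pow2_ge_0 (x0-y0)). assert ((x0*y0-1)^2 - (x0*x0-1)*(y0*y0-1) = (x0-y0)^2) by ring. lra. }
  assert (H2' : 1 <= x0*y0).
  { assert (1 <= x0*x0) by nra. assert (1 <= y0*y0) by nra. nra. }
  destruct (Rle_dec (x1*y1+x2*y2) (x0*y0-1)) as [h|h]; [lra|].
  exfalso. assert (x0*y0-1 < x1*y1+x2*y2) by lra. nra.
Qed.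

Lemma null_perp_zero x v : mink x x = -1 -> mink v v = 0 -> mink v x = 0 ->
  c0 v = 0 /\ c1 v = 0 /\ c2 v = 0.
Proof.
  destruct x as [x0 x1 x2], v as [v0 v1 v2]; unfold mink; simpl.
  intros Hx Hv Hvx.
  assert (HC : (x1*v1+x2*v2)^2 + (x1*v2-x2*v1)^2 = (x1*x1+x2*x2)*(v1*v1+v2*v2)) by ring.
  assert (E1 : x1*v1+x2*v2 = x0*v0) by lra.
  assert (E2 : x1*x1+x2*x2 = x0*x0-1) by lra.
  assert (E3 : v1*v1+v2*v2 = v0*v0) by lra.
  rewrite E1, E2, E3 in HC.
  assert (Z : v0*v0 + (x1*v2-x2*v1)^2 = 0) by (ring_simplify in HC; ring_simplify; lra).
  pose proof (pow2_ge_0 (x1*v2-x2*v1)).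
  assert (v0*v0 = 0) by (pose proof (Rle_0_sqr v0); unfold Rsqr in *; lra).
  assert (v0 = 0) by (apply Rmult_integral in H0; tauto).
  subst. assert (v1*v1 + v2*v2 = 0) by lra.
  pose proof (Rle_0_sqr v1); pose proof (Rle_0_sqr v2); unfold Rsqr in *.
  assert (v1*v1 = 0) by lra. assert (v2*v2=0) by lra.
  split; [reflexivity|]; split; [apply Rmult_integral in H4 | apply Rmult_integral in H5]; tauto.
Qed.

Definition det3 (e f g : pt) : R :=
  c0 e * (c1 f * c2 g - c2 f * c1 g) - c1 e * (c0 f * c2 g - c2 f * c0 g)
  + c2 e * (c0 f * c1 g - c1 f * c0 g).

Lemma gram3 e f g :
  let a := mink e e in let b := mink f f in let c := mink g g in
  let d := mink e f in let h := mink e g in let k := mink f g in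
  a*(b*c - k*k) - d*(d*c - k*h) + h*(d*k - b*h) = - (det3 e f g)^2.
Proof.
  destruct e, f, g; unfold mink, det3; simpl; ring.
Qed.

Definition crs (p n : pt) : pt :=
  Pt (-(c1 p * c2 n - c2 p * c1 n)) (c2 p * c0 n - c0 p * c2 n) (c0 p * c1 n - c1 p * c0 n).

Lemma crs_mink p n v : mink (crs p n) v = det3 p n v.
Proof. destruct p, n, v; unfold mink, det3, crs; simpl; ring. Qed.

Lemma crs_norm p n : mink (crs p n) (crs p n) = - (mink p p * mink n n - mink p n ^ 2).
Proof. destruct p, n; unfold mink, crs; simpl; ring. Qed.
Lemma cosh_sinh_sq t : cosh t * cosh t - sinh t * sinh t = 1.
Proof.
  unfold cosh, sinh. rewrite exp_Ropp. pose proof (exp_pos t). field. lra.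
Qed.

Lemma cosh_plus' x y : cosh (x + y) = cosh x * cosh y + sinh x * sinh y.
Proof.
  unfold cosh, sinh. rewrite Ropp_plus_distr, !exp_plus, !exp_Ropp.
  pose proof (exp_pos x); pose proof (exp_pos y). field. lra.
Qed.

Lemma cosh_minus' x y : cosh (x - y) = cosh x * cosh y - sinh x * sinh y.
Proof.
  unfold Rminus. rewrite cosh_plus'. unfold cosh, sinh. rewrite Ropp_involutive.
  field.
Qed.

Lemma sinh_nonneg t : 0 <= t -> 0 <= sinh t.
Proof.
  intros H. destruct (Req_dec t 0) as [->|h]. rewrite sinh_0; lra.
  pose proof (sinh_lt 0 t ltac:(lra)). rewrite sinh_0 in H0; lra.
Qed.

Lemma sinh_pos t : 0 < t -> 0 < sinh t.
Proof. intros H. pose proof (sinh_lt 0 t H). rewrite sinh_0 in H0; lra. Qed.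

Lemma cosh_ge1 t : 1 <= cosh t.
Proof.
  pose proof (cosh_sinh_sq t). unfold cosh in *. pose proof (exp_pos t); pose proof (exp_pos (-t)).
  nra.
Qed.

Lemma cosh_mono s t : 0 <= s -> s <= t -> cosh s <= cosh t.
Proof.
  intros Hs Hst.
  assert (cosh t = cosh (s + (t - s))) by (f_equal; ring). rewrite H, cosh_plus'.
  pose proof (cosh_ge1 (t-s)); pose proof (sinh_nonneg s Hs); pose proof (sinh_nonneg (t-s) ltac:(lra)).
  pose proof (cosh_ge1 s). nra.
Qed.

Lemma cosh_double t : cosh (2*t) = 2 * cosh t * cosh t - 1.
Proof.
  replace (2*t) with (t+t) by ring. rewrite cosh_plus'. pose proof (cosh_sinh_sq t). lra.
Qed.

Lemma arcosh_exp c : 1 <= c -> exp (arcosh c) = c + sqrt (c*c-1).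
Proof.
  intros H. unfold arcosh. apply exp_ln. pose proof (sqrt_pos (c*c-1)). lra.
Qed.

Lemma arcosh_cosh_sinh c : 1 <= c -> cosh (arcosh c) = c /\ sinh (arcosh c) = sqrt (c*c-1).
Proof.
  intros H. unfold cosh, sinh. rewrite exp_Ropp, arcosh_exp by lra.
  assert (Hs : sqrt (c*c-1) * sqrt (c*c-1) = c*c-1) by (apply sqrt_sqrt; nra).
  pose proof (sqrt_pos (c*c-1)).
  assert (Hinv : / (c + sqrt (c*c-1)) = c - sqrt (c*c-1)).
  { field_simplify_eq; [| lra]. nra. }
  rewrite Hinv. split; field.
Qed.

Lemma cosh_arcosh c : 1 <= c -> cosh (arcosh c) = c.
Proof. intros H; apply (arcosh_cosh_sinh c H). Qed.
Lemma sinh_arcosh c : 1 <= c -> sinh (arcosh c) = sqrt (c*c-1).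
Proof. intros H; apply (arcosh_cosh_sinh c H). Qed.

Lemma arcosh_nonneg c : 1 <= c -> 0 <= arcosh c.
Proof.
  intros H. rewrite <- ln_1. unfold arcosh. pose proof (sqrt_pos (c*c-1)).
  destruct (Req_dec (c + sqrt (c*c-1)) 1) as [E|E]. rewrite E; lra.
  left. apply ln_increasing; lra.
Qed.

Lemma arcosh_of_cosh t : 0 <= t -> arcosh (cosh t) = t.
Proof.
  intros H. unfold arcosh.
  replace (cosh t * cosh t - 1) with (sinh t * sinh t) by (pose proof (cosh_sinh_sq t); lra).
  rewrite sqrt_square by (apply sinh_nonneg; lra).
  replace (cosh t + sinh t) with (exp t) by (unfold cosh, sinh; field).
  apply ln_exp.
Qed.

Lemma arcosh_mono c d : 1 <= c -> c <= d -> arcosh c <= arcosh d.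
Proof.
  intros Hc Hcd. unfold arcosh.
  assert (sqrt (c*c-1) <= sqrt (d*d-1)) by (apply sqrt_le_1_alt; nra).
  pose proof (sqrt_pos (c*c-1)).
  destruct (Req_dec (c + sqrt (c*c-1)) (d + sqrt (d*d-1))) as [E|E]. rewrite E; lra.
  left. apply ln_increasing; lra.
Qed.

Lemma hdist_sym x y : hdist x y = hdist y x.
Proof. unfold hdist, mink. f_equal. ring. Qed.

Lemma sq_le_le a b : 0 <= b -> a*a <= b*b -> a <= b.
Proof. intros Hb H. destruct (Rle_dec a b) as [h|h]; [lra|]. exfalso. nra. Qed.

Lemma tri x y z : H2 x -> H2 y -> H2 z -> hdist x z <= hdist x y + hdist y z.
Proof.
  intros Hx Hy Hz.
  pose proof (H2_ge1 x y Hx Hy) as G1. pose proof (H2_ge1 y z Hy Hz) as G2.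
  pose proof (H2_ge1 x z Hx Hz) as G3.
  pose proof (gram3 y x z) as Gr. simpl in Gr.
  destruct Hx as [Ex _], Hy as [Ey _], Hz as [Ez _].
  rewrite Ex, Ey, Ez, (mink_sym y x) in Gr.
  set (c1 := - mink x y) in *. set (c2 := - mink y z) in *. set (c3 := - mink x z) in *.
  replace (mink x y) with (-c1) in Gr by (unfold c1; ring).
  replace (mink y z) with (-c2) in Gr by (unfold c2; ring).
  replace (mink x z) with (-c3) in Gr by (unfold c3; ring).
  pose proof (pow2_ge_0 (det3 y x z)).
  assert (K : (c3 - c1*c2)*(c3-c1*c2) <= (c1*c1-1)*(c2*c2-1)) by nra.
  assert (S1 : sqrt (c1*c1-1) * sqrt (c1*c1-1) = c1*c1-1) by (apply sqrt_sqrt; nra).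
  assert (S2 : sqrt (c2*c2-1) * sqrt (c2*c2-1) = c2*c2-1) by (apply sqrt_sqrt; nra).
  pose proof (sqrt_pos (c1*c1-1)); pose proof (sqrt_pos (c2*c2-1)).
  assert (K2 : c3 - c1*c2 <= sqrt (c1*c1-1) * sqrt (c2*c2-1)).
  { apply sq_le_le. nra. replace (sqrt (c1 * c1 - 1) * sqrt (c2 * c2 - 1) * (sqrt (c1 * c1 - 1) * sqrt (c2 * c2 - 1))) with ((sqrt (c1 * c1 - 1) * sqrt (c1 * c1 - 1)) * (sqrt (c2 * c2 - 1) * sqrt (c2 * c2 - 1))) by ring. rewrite S1, S2. lra. }
  unfold hdist. fold c1 c2 c3.
  rewrite <- (arcosh_of_cosh (arcosh c1 + arcosh c2)) by (pose proof (arcosh_nonneg c1 G1); pose proof (arcosh_nonneg c2 G2); lra).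
  apply arcosh_mono; [lra|].
  rewrite cosh_plus', !cosh_arcosh, !sinh_arcosh by lra. lra.
Qed.

Definition lin (a : R) (x : pt) (b : R) (y : pt) : pt :=
  Pt (a * c0 x + b * c0 y) (a * c1 x + b * c1 y) (a * c2 x + b * c2 y).

Lemma mink_lin_l a x b y z : mink (lin a x b y) z = a * mink x z + b * mink y z.
Proof. unfold mink, lin; simpl; ring. Qed.
Lemma mink_lin_r a x b y z : mink z (lin a x b y) = a * mink z x + b * mink z y.
Proof. unfold mink, lin; simpl; ring. Qed.

Lemma pt_eq x y : c0 x = c0 y -> c1 x = c1 y -> c2 x = c2 y -> x = y.
Proof. destruct x, y; simpl; intros; subst; reflexivity. Qed.

Lemma perp_form n p q : unit_normal n -> perp_at n p q ->
  q = lin (- mink q p) p (mink q n) n.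
Proof.
  intros Hn [[Hp Hpn] [Hq [Hne Hperp]]].
  set (u := crs p n).
  assert (Uu : mink u u = 1).
  { unfold u; rewrite crs_norm. unfold unit_normal in Hn. destruct Hp as [Hp _].
    rewrite Hp, Hn, Hpn. ring. }
  assert (Up : mink u p = 0) by (unfold u; rewrite crs_mink; unfold det3; ring).
  assert (Un : mink u n = 0) by (unfold u; rewrite crs_mink; unfold det3; ring).
  assert (Hk : exists k, (k = 1 \/ k = -1) /\ 0 < 5/4 * c0 p + k * (3/4) * c0 u).
  { destruct (Rlt_dec 0 (5/4 * c0 p + 1 * (3/4) * c0 u)).
    exists 1; split; auto.
    exists (-1); split; auto. destruct Hp as [_ Hp0]. lra. }
  destruct Hk as [k [Hk Hk0]].
  set (p' := lin (5/4) p (k*(3/4)) u).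
  assert (Lp' : line n p').
  { destruct Hp as [Hpp Hp0].
    split; [split|].
    - unfold p'. rewrite mink_lin_l, !mink_lin_r, (mink_sym p u), Uu, Up, Hpp.
      destruct Hk; subst; field.
    - unfold p', lin. change (0 < 5/4 * c0 p + k*(3/4)*c0 u). exact Hk0.
    - unfold p'. rewrite mink_lin_l, Hpn, Un. ring. }
  pose proof (Hperp p' Lp') as Hz.
  set (T := tangent_to p q) in *.
  assert (Tp' : tangent_to p p' = lin 0 p (k*(3/4)) u).
  { assert (mink p' p = -5/4).
    { unfold p'. rewrite mink_lin_l, Up. destruct Hp as [Hpp _]. rewrite Hpp. lra. }
    unfold tangent_to. rewrite H. unfold p', lin; simpl. apply pt_eq; simpl; lra. }
  rewrite Tp', mink_lin_r in Hz.
  assert (TU : mink T u = 0).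
  { destruct Hk; subst; lra. }
  assert (TE : T = lin 1 q (mink q p) p).
  { unfold T, tangent_to, lin. apply pt_eq; simpl; lra. }
  assert (Tp : mink T p = 0).
  { rewrite TE, mink_lin_l. destruct Hp as [Hpp _]. rewrite Hpp. lra. }
  assert (Tn : mink T n = mink q n).
  { rewrite TE, mink_lin_l, Hpn. lra. }
  set (w := lin 1 T (- mink T n) n).
  assert (Wp : mink w p = 0) by (unfold w; rewrite mink_lin_l, (mink_sym n p), Hpn, Tp; ring).
  assert (Wn : mink w n = 0) by (unfold w; rewrite mink_lin_l, Hn; ring).
  assert (Wd : det3 p n w = 0).
  { unfold w. replace (det3 p n (lin 1 T (- mink T n) n)) with (det3 p n T - mink T n * det3 p n n)
      by (unfold det3, lin; simpl; ring).
    rewrite <- !crs_mink. fold u. rewrite (mink_sym u T), TU, Un. lra. }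
  pose proof (gram3 p n w) as G. simpl in G.
  destruct Hp as [Hpp Hp0].
  rewrite Hpp, Hn, Hpn, (mink_sym p w), (mink_sym n w), Wp, Wn, Wd in G.
  assert (Ww : mink w w = 0) by lra.
  destruct (null_perp_zero p w Hpp Ww Wp) as [W0 [W1 W2]].
  unfold w, lin in W0, W1, W2; simpl in W0, W1, W2.
  rewrite Tn in W0, W1, W2.
  apply pt_eq; unfold lin; simpl; lra.
Qed.

Lemma hyper_form n r sg p q : 0 < r -> unit_normal n -> (sg = 1 \/ sg = -1) ->
  perp_at n p q -> hypercycle n r sg q -> q = lin (cosh r) p (sg * sinh r) n.
Proof.
  intros Hr Hn Hsg Hpq [[Hq [Hlow Hsup]] Hside].
  pose proof (perp_form n p q Hn Hpq) as E.
  destruct Hpq as [[Hp Hpn] _].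
  pose proof (H2_ge1 q p Hq Hp) as Ga.
  remember (- mink q p) as a eqn:Ea. remember (mink q n) as b eqn:Eb.
  assert (Cy : forall y, line n y -> a <= - mink q y).
  { intros y [Hy Hyn]. rewrite E, mink_lin_l, (mink_sym n y), Hyn.
    pose proof (H2_ge1 p y Hp Hy). nra. }
  assert (R1 : r <= arcosh a).
  { pose proof (Hlow p (conj Hp Hpn)). unfold hdist in H. rewrite <- Ea in H. exact H. }
  assert (R2 : arcosh a <= r).
  { apply Hsup. intros y Ly. unfold hdist. apply arcosh_mono; [lra|]. apply Cy; exact Ly. }
  assert (Ar : a = cosh r) by (rewrite <- (cosh_arcosh a) by lra; f_equal; lra).
  destruct Hq as [Hqq _].
  rewrite E, mink_lin_l, !mink_lin_r in Hqq. destruct Hp as [Hpp _].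
  rewrite Hpp, Hn, Hpn, (mink_sym n p), Hpn in Hqq.
  pose proof (cosh_sinh_sq r) as CS. pose proof (sinh_pos r Hr) as Sp.
  assert (Bsq : b*b = sinh r * sinh r).
  { rewrite Ar in Hqq. replace (b*b) with (cosh r * (cosh r * -1 + b * 0) + b * (cosh r * 0 + b * 1) + cosh r * cosh r) by ring. lra. }
  assert (Bs : b = sg * sinh r).
  { destruct Hsg; subst sg.
    - assert ((b - sinh r)*(b + sinh r) = 0) by lra.
      apply Rmult_integral in H. destruct H; lra.
    - assert ((b - sinh r)*(b + sinh r) = 0) by lra.
      apply Rmult_integral in H. destruct H; lra. }
  rewrite E, Ar, Bs. reflexivity.
Qed.

Lemma seg_form n r sg p q x : 0 < r -> unit_normal n -> (sg = 1 \/ sg = -1) ->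
  line n p -> H2 q -> q = lin (cosh r) p (sg * sinh r) n -> seg p q x ->
  exists s, 0 <= s <= r /\ x = lin (cosh s) p (sg * sinh s) n.
Proof.
  intros Hr Hn Hsg [Hp Hpn] Hq Eq [Hx Hs].
  assert (Sg2 : sg * sg = 1) by (destruct Hsg; subst; lra).
  pose proof Hp as [Hpp _]. pose proof Hx as [Hxx _]. unfold unit_normal in Hn.
  assert (Dpq : hdist p q = r).
  { unfold hdist. rewrite Eq, mink_lin_r, Hpp, Hpn.
    replace (- (cosh r * -1 + sg * sinh r * 0)) with (cosh r) by ring.
    apply arcosh_of_cosh; lra. }
  rewrite Dpq in Hs.
  pose proof (H2_ge1 p x Hp Hx) as G1.
  pose proof (H2_ge1 x q Hx Hq) as G2.
  set (s := hdist p x) in *.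
  assert (s0 : 0 <= s) by (apply arcosh_nonneg; exact G1).
  assert (t0 : 0 <= hdist x q) by (apply arcosh_nonneg; exact G2).
  assert (Cs : cosh s = - mink p x) by (apply cosh_arcosh; exact G1).
  assert (Ct : cosh (r - s) = - mink x q).
  { replace (r - s) with (hdist x q) by lra. apply cosh_arcosh; exact G2. }
  rewrite cosh_minus', Eq, mink_lin_r, (mink_sym x p) in Ct. replace (mink p x) with (- cosh s) in Ct by lra.
  pose proof (sinh_pos r Hr) as Sp.
  assert (Xn : mink x n = sg * sinh s).
  { assert (sinh r * (sg * mink x n - sinh s) = 0) by lra.
    apply Rmult_integral in H. destruct H; [lra|].
    replace (mink x n) with (sg * sg * mink x n) by (rewrite Sg2; ring). nra. }
  exists s. split; [lra|].
  set (z := lin (cosh s) p (sg * sinh s) n).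
  pose proof (cosh_sinh_sq s) as CSs.
  assert (Xz : mink x z = -1).
  { unfold z. rewrite mink_lin_r, (mink_sym x p), Xn. replace (mink p x) with (- cosh s) by lra.
    replace (cosh s * - cosh s + sg * sinh s * (sg * sinh s)) with (- (cosh s * cosh s) + (sg*sg) * (sinh s * sinh s)) by ring.
    rewrite Sg2. lra. }
  assert (Zz : mink z z = -1).
  { unfold z. rewrite mink_lin_l, !mink_lin_r, Hpp, Hn, Hpn, (mink_sym n p), Hpn.
    replace (cosh s * (cosh s * -1 + sg * sinh s * 0) + sg * sinh s * (cosh s * 0 + sg * sinh s * 1))
      with (- (cosh s * cosh s) + (sg*sg) * (sinh s * sinh s)) by ring.
    rewrite Sg2. lra. }
  set (v := lin 1 x (-1) z).
  assert (Vv : mink v v = 0).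
  { unfold v. rewrite mink_lin_l, !mink_lin_r, Hxx, Zz, Xz, (mink_sym z x), Xz. ring. }
  assert (Vx : mink v x = 0).
  { unfold v. rewrite mink_lin_l, Hxx, (mink_sym z x), Xz. ring. }
  destruct (null_perp_zero x v Hxx Vv Vx) as [V0 [V1 V2]].
  unfold v, lin in V0, V1, V2; simpl in V0, V1, V2.
  apply pt_eq; unfold z, lin in *; simpl in *; lra.
Qed.

Lemma tanh_le1 r : 0 < r -> 0 < tanh r < 1.
Proof.
  intros Hr. unfold tanh. pose proof (sinh_pos r Hr). pose proof (cosh_ge1 r).
  assert (sinh r < cosh r) by (unfold sinh, cosh; pose proof (exp_pos (-r)); lra).
  split. apply Rdiv_lt_0_compat; lra.
  apply Rmult_lt_reg_r with (cosh r); [lra|]. unfold Rdiv. rewrite Rmult_assoc, Rinv_l by lra. lra.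
Qed.

Lemma cosh_small w t : 0 <= w -> w <= t -> t <= 1 -> cosh w - 1 <= 3/2 * (t*t).
Proof.
  intros H0 H1 H2.
  assert (Z3 : exp w <= 3).
  { destruct (Req_dec w 1) as [->|h]. apply exp_le_3.
    pose proof (exp_increasing w 1 ltac:(lra)). pose proof exp_le_3. lra. }
  assert (Iz : exp (-w) = / exp w) by apply exp_Ropp.
  pose proof (exp_pos w) as Zp.
  assert (ZI : exp w * exp (-w) = 1) by (rewrite Iz; field; lra).
  pose proof (exp_ineq1_le (-w)) as L.
  assert (Iz1 : exp (-w) <= 1).
  { destruct (Req_dec w 0) as [->|h]. rewrite Ropp_0, exp_0; lra.
    pose proof (exp_increasing (-w) 0 ltac:(lra)). rewrite exp_0 in H. lra. }
  assert (E : cosh w - 1 = exp w * (1 - exp (-w)) * (1 - exp (-w)) / 2).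
  { unfold cosh. replace (exp w * (1 - exp (- w)) * (1 - exp (- w))) with
      (exp w - 2 * (exp w * exp (-w)) + (exp w * exp (-w)) * exp (-w)) by ring.
    rewrite ZI. lra. }
  rewrite E.
  assert (A : 0 <= 1 - exp (-w) <= w) by lra.
  assert (B : (1 - exp (-w)) * (1 - exp (-w)) <= t * t) by nra.
  pose proof (Rle_0_sqr (1 - exp (-w))). unfold Rsqr in *.
  nra.
Qed.

Lemma cosh_diff_le a b a' b' : 1 <= a' <= a -> 0 <= b -> 0 <= b' ->
  a*a - b*b = 1 -> a'*a' - b'*b' = 1 -> a*a' - b*b' <= a.
Proof.
  intros [h1 h2] hb hb' E E'.
  assert (a*(a'-1) <= b*b').
  { apply sq_le_le. nra.
    replace (b*b'*(b*b')) with ((b*b)*(b'*b')) by ring.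
    replace (b*b) with (a*a-1) by lra. replace (b'*b') with (a'*a'-1) by lra.
    assert (a <= a*a) by nra. assert (0 <= (a'-1)*(2*(a*a) - a' - 1)) by (apply Rmult_le_pos; lra).
    assert (E2 : (a*a-1)*(a'*a'-1) - a*(a'-1)*(a*(a'-1)) = (a'-1)*(2*(a*a) - a' - 1)) by ring. lra. }
  nra.
Qed.

Lemma final_ineq C S T a b a' b' X : 1 <= C -> C*C - S*S = 1 -> C*T = S ->
  1 <= a <= C -> 1 <= a' <= C -> 0 <= b -> 0 <= b' ->
  a*a - b*b = 1 -> a'*a'-b'*b' = 1 -> 1 <= X -> X - 1 <= 3/2*(T*T) ->
  a*a'*X - b*b' <= 2*C*C - 1.
Proof.
  intros HC HCS HT Ha Ha' Hb Hb' Ea Ea' HX HX2.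
  assert (D : a*a' - b*b' <= C).
  { destruct (Rle_dec a' a).
    - pose proof (cosh_diff_le a b a' b' ltac:(lra) Hb Hb' Ea Ea'). lra.
    - pose proof (cosh_diff_le a' b' a b ltac:(lra) Hb' Hb Ea' Ea). lra. }
  assert (P : a*a' <= C*C) by nra.
  assert (Q : a*a'*(X-1) <= C*C*(X-1)) by nra.
  assert (R' : C*C*(X-1) <= 3/2*(S*S)).
  { rewrite <- HT. nra. }
  replace (a*a'*X - b*b') with ((a*a'-b*b') + a*a'*(X-1)) by ring.
  nra.
Qed.

Theorem lemma8 (r : R) (n : pt) (sg : R) (b b' a a' : pt) :
  0 < r ->
  unit_normal n ->
  (sg = 1 \/ sg = -1) ->
  line n b -> line n b' ->
  hdist b b' = tanh r ->
  hypercycle n r sg a -> hypercycle n r sg a' ->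
  perp_at n b a -> perp_at n b' a' ->
  forall x y, box n r sg b b' x -> box n r sg b b' y -> hdist x y <= 2 * r.
Proof.
  intros Hr Hn Hsg Lb Lb' Dbb _ _ _ _ x y [p [q [Sp [Hq [Ppq Sx]]]]] [p' [q' [Sp' [Hq' [Ppq' Sy]]]]].
  pose proof (hyper_form n r sg p q Hr Hn Hsg Ppq Hq) as Eq.
  pose proof (hyper_form n r sg p' q' Hr Hn Hsg Ppq' Hq') as Eq'.
  assert (Lp : line n p) by apply Ppq. assert (Lp' : line n p') by apply Ppq'.
  assert (H2q : H2 q) by apply Hq. assert (H2q' : H2 q') by apply Hq'.
  destruct (seg_form n r sg p q x Hr Hn Hsg Lp H2q Eq Sx) as [s [Hs Ex]].
  destruct (seg_form n r sg p' q' y Hr Hn Hsg Lp' H2q' Eq' Sy) as [s' [Hs' Ey]].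
  destruct Lp as [Hp Hpn]. destruct Lp' as [Hp' Hp'n].
  destruct Lb as [Hb _]. destruct Lb' as [Hb' _].
  assert (W : hdist p p' <= tanh r).
  { destruct Sp as [_ E1]. destruct Sp' as [_ E2].
    pose proof (tri p b p' Hp Hb Hp'). pose proof (tri p b' p' Hp Hb' Hp').
    rewrite (hdist_sym p b) in H. rewrite (hdist_sym b' p') in H0. lra. }
  pose proof (H2_ge1 p p' Hp Hp') as GX.
  set (X := - mink p p') in *.
  assert (CX : cosh (hdist p p') = X) by (apply cosh_arcosh; exact GX).
  pose proof (tanh_le1 r Hr) as Tl.
  pose proof (arcosh_nonneg X GX) as W0.
  assert (X1 : X - 1 <= 3/2 * (tanh r * tanh r)).
  { rewrite <- CX. apply cosh_small; [exact W0 | exact W | lra]. }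
  assert (Sg2 : sg * sg = 1) by (destruct Hsg; subst; lra).
  unfold unit_normal in Hn.
  assert (Cxy : - mink x y = cosh s * cosh s' * X - sinh s * sinh s').
  { rewrite Ex, Ey, mink_lin_l, !mink_lin_r, Hpn, Hn, (mink_sym n p'), Hp'n.
    unfold X. replace (sg * sinh s * (cosh s' * 0 + sg * sinh s' * 1)) with ((sg*sg) * (sinh s * sinh s')) by ring.
    rewrite Sg2. ring. }
  pose proof (cosh_ge1 r) as C1.
  assert (Fin : - mink x y <= 2 * cosh r * cosh r - 1).
  { rewrite Cxy. apply (final_ineq (cosh r) (sinh r) (tanh r)); try lra.
    - apply cosh_sinh_sq.
    - unfold tanh. field. lra.
    - split. apply cosh_ge1. apply cosh_mono; lra.
    - split. apply cosh_ge1. apply cosh_mono; lra.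
    - apply sinh_nonneg; lra.
    - apply sinh_nonneg; lra.
    - apply cosh_sinh_sq.
    - apply cosh_sinh_sq. }
  assert (H2x : H2 x) by apply Sx. assert (H2y : H2 y) by apply Sy.
  unfold hdist. rewrite <- (arcosh_of_cosh (2*r)) by lra.
  apply arcosh_mono. apply H2_ge1; assumption.
  rewrite cosh_double. lra.
Qed.
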